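(* Let $G=\langle a,b\mid a^2b=ba^2\rangle$, let $\hat G$ be its pro-$2$ completion, and let $\hat H\subset\hat G$ be the kernel of the continuous homomorphism $\hat G\to\mathbb Z/2\mathbb Z$ sending $a\mapsto0$ and $b\mapsto1$ (equivalently, the pro-$2$ completion of the kernel $H$ of the corresponding homomorphism $G\to\mathbb Z/2\mathbb Z$). Then: (1) the reduction maps $H^1(\hat G,\mathbb Z/2^n\mathbb Z)\to H^1(\hat G,\mathbb Z/2\mathbb Z)$ are surjective for all $n\ge1$; (2) the reduction map $H^1(\hat H,\mathbb Z/4\mathbb Z)\to H^1(\hat H,\mathbb Z/2\mathbb Z)$ is not surjective; (3) there exist $\chi_1,\chi_2,\chi_3\in H^1(\hat G,\mathbb Z/2\mathbb Z)$ such that the mod 2 Massey product $\langle\chi_1,\chi_2,\chi_3\rangle$ is defined but does not vanish.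
   Context: All coefficient modules have trivial action. Massey products: for $a_1,\dots,a_n\in H^1$ of a differential graded ring $A$, a defining system is $a_{ij}\in A^1$ ($1\le i<j\le n+1$, $(i,j)\neq(1,n+1)$) with $\partial a_{i,i+1}=0$ representing $a_i$ and $\partial a_{ij}=-\sum_{l=i+1}^{j-1}a_{il}a_{lj}$; its value is the class of $-\sum_{l=2}^na_{1l}a_{l,n+1}$; $\langle a_1,\dots,a_n\rangle$ is the set of values, defined if nonempty, vanishing if it contains $0$. Mod 2 Massey products of $\hat G$ are taken in continuous cochains $C^*(\hat G,\mathbb Z/2\mathbb Z)$ with cup product. *)

(* Defs.v *)
From HB Require Import structures.
From mathcomp Require Import all_boot all_order all_algebra all_fingroup all_solvable.
Set Implicit Arguments. Unset Strict Implicit. Unset Printing Implicit Defensive.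
Import GRing.Theory.

(* Elements of G are represented by words in the free group on a, b:       *)
(* a letter (gen, inv) stands for a (gen = false) or b (gen = true),       *)
(* inverted when inv = true.  Words are multiplied by concatenation.       *)
Definition letter := (bool * bool)%type.
Definition word := seq letter.

Definition eval_letter (gT : finGroupType) (x y : gT) (l : letter) : gT :=
  let g := if l.1 then y else x in if l.2 then (g^-1)%g else g.
Definition eval_word (gT : finGroupType) (x y : gT) (w : word) : gT :=
  foldr (fun l acc => (eval_letter x y l * acc)%g) 1%g w.

(* (x, y) satisfies the defining relation of G in a finite 2-group gT,     *)
(* i.e. a |-> x, b |-> y defines a homomorphism from G onto a finite       *)
(* 2-group (a finite 2-quotient of G, i.e. a quotient of G^ by an open      *)
(* normal subgroup).                                                        *)
Definition two_quotient (gT : finGroupType) (x y : gT) : Prop :=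
  pgroup 2 [set: gT] /\ (x ^+ 2 * y = y * x ^+ 2)%g.

(* The homomorphism G -> Z/2, a |-> 0, b |-> 1 : parity of b-letters.      *)
Definition in_H (w : word) : bool := ~~ odd (count (fun l : letter => l.1) w).
Definition in_G (w : word) : bool := true.

(* Continuous cochains.  For S = in_G (resp. S = in_H) the words in S      *)
(* represent the dense subgroup G of G^ (resp. H of H^).  A continuous     *)
(* cochain on G^ (resp. H^) with values in a finite discrete module A is   *)
(* determined by its restriction to the dense subgroup, and a function on  *)
(* the dense subgroup extends continuously iff it factors through a finite *)
(* 2-quotient of G (continuity for the pro-2 topology).  Only the values   *)
(* on words in S matter.                                                   *)
Section Cochains.
Variables (S : pred word) (A : zmodType).

Definition cont1 (f : word -> A) : Prop :=
  exists (gT : finGroupType) (x y : gT) (g : gT -> A),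
    two_quotient x y /\ forall w, S w -> f w = g (eval_word x y w).

Definition cont2 (f : word -> word -> A) : Prop :=
  exists (gT : finGroupType) (x y : gT) (g : gT -> gT -> A),
    two_quotient x y /\
    forall w1 w2, S w1 -> S w2 -> f w1 w2 = g (eval_word x y w1) (eval_word x y w2).

(* differentials (trivial action); 0-cochains are constants c : A *)
Definition d0 (c : A) : word -> A := fun _ => (c - c)%R.
Definition d1 (f : word -> A) : word -> word -> A :=
  fun g h => (f h - f (g ++ h) + f g)%R.

Definition cocycle1 (f : word -> A) : Prop :=
  forall g h, S g -> S h -> d1 f g h = 0%R.
Definition cohom1 (f f' : word -> A) : Prop :=
  exists c : A, forall w, S w -> (f w - f' w)%R = d0 c w.
(* a continuous 1-cocycle, i.e. a representative of a class in H^1 *)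
Definition Z1 (f : word -> A) : Prop := cont1 f /\ cocycle1 f.
Definition coboundary2 (F : word -> word -> A) : Prop :=
  exists c : word -> A, cont1 c /\ forall g h, S g -> S h -> F g h = d1 c g h.
End Cochains.

Definition red2 (m : nat) (x : 'Z_m) : 'Z_2 := ((val x)%:R : 'Z_2)%R.

(* Massey products in C^*(G^, R) (cup product (f u g)(g1,g2) = f g1 * g g2)*)
(* chi = [:: chi_1; ...; chi_n] are 1-cocycles representing a_1..a_n.      *)
(* A defining system is a family a i j (1 <= i < j <= n+1, (i,j) <> (1,n+1))*)
Section Massey.
Variables (S : pred word) (R : comRingType).

Definition massey_defsys (chi : seq (word -> R)) (a : nat -> nat -> word -> R)
  : Prop :=
  let n := size chi in
  (forall i j, 1 <= i -> i < j -> j <= n.+1 -> (i, j) <> (1, n.+1) ->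
     cont1 S (a i j))%N /\
  (forall i, 1 <= i -> i <= n ->
     cocycle1 S (a i i.+1) /\ cohom1 S (a i i.+1) (nth (fun _ => 0%R) chi i.-1))%N /\
  (forall i j, 1 <= i -> i.+1 < j -> j <= n.+1 -> (i, j) <> (1, n.+1) ->
     forall g h, S g -> S h ->
       d1 (a i j) g h = (- \sum_(i.+1 <= l < j) a i l g * a l j h)%R)%N.

Definition massey_value (n : nat) (a : nat -> nat -> word -> R)
  : word -> word -> R :=
  fun g h => (- \sum_(2 <= l < n.+1) a 1%N l g * a l n.+1 h)%R.

Definition massey_defined (chi : seq (word -> R)) : Prop :=
  exists a, massey_defsys chi a.

Definition massey_vanishes (chi : seq (word -> R)) : Prop :=
  exists a, massey_defsys chi a /\ coboundary2 S (massey_value (size chi) a).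
End Massey.

(* Main.v *)
From HB Require Import structures.
Require Import Defs.
From mathcomp Require Import all_boot all_order all_algebra all_fingroup all_solvable.
Set Implicit Arguments. Unset Strict Implicit. Unset Printing Implicit Defensive.
Import GRing.Theory.

Definition heis := (bool * bool * bool)%type.
HB.instance Definition _ := Finite.on heis.
Definition hmul (u v : heis) : heis :=
  (u.1.1 (+) v.1.1, u.1.2 (+) v.1.2, u.2 (+) v.2 (+) (u.1.1 && v.1.2)).
Definition hone : heis := (false, false, false).
Definition hinv (u : heis) : heis := (u.1.1, u.1.2, u.2 (+) (u.1.1 && u.1.2)).
Lemma hmulA : associative hmul.
Proof. by do ![case] . Qed.
Lemma hmul1 : left_id hone hmul.
Proof. by do ![case]. Qed.
Lemma hmulV : left_inverse hone hinv hmul.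
Proof. by do ![case]. Qed.
HB.instance Definition _ := Finite_isGroup.Build heis hmulA hmul1 hmulV.

Lemma heis_p : pgroup 2 [set: heis].
Proof. by rewrite /pgroup cardsT !card_prod card_bool. Qed.

Lemma eval_cat (gT : finGroupType) (x y : gT) w1 w2 :
  eval_word x y (w1 ++ w2) = (eval_word x y w1 * eval_word x y w2)%g.
Proof.
elim: w1 => [|l w IH] /=; first by rewrite mul1g.
by rewrite IH mulgA.
Qed.

Lemma cont1_eq (S : pred word) (A : zmodType) (f : word -> A) w1 w2 :
  cont1 S f -> S w1 -> S w2 ->
  (forall (gT : finGroupType) (x y : gT), two_quotient x y ->
     eval_word x y w1 = eval_word x y w2) -> f w1 = f w2.
Proof.
move=> [gT [x [y [g [Hq Hf]]]]] H1 H2 He.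
by rewrite !Hf // He.
Qed.

Definition b2z (b : bool) : 'Z_2 := if b then 1%R else 0%R.
Lemma b2zD b1 b2 : b2z (b1 (+) b2) = (b2z b1 + b2z b2)%R.
Proof. by case: b1; case: b2; apply/val_inj. Qed.
Lemma b2zM b1 b2 : b2z (b1 && b2) = (b2z b1 * b2z b2)%R.
Proof. by case: b1; case: b2; apply/val_inj. Qed.

Definition xa : heis := (true, false, false).
Definition yb : heis := (false, true, false).
Definition xaa : heis := (true, true, false).
Lemma tq1 : two_quotient xa yb.
Proof. by split; [exact: heis_p|]. Qed.
Lemma tq2 : two_quotient xaa 1%g.
Proof. by split; [exact: heis_p|]. Qed.
Local Open Scope ring_scope.
Lemma z2cases (x : 'Z_2) : x = 0 \/ x = 1.
Proof. case: x => [[|[|//]] px]; [left|right]; exact: val_inj. Qed.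
Lemma test (x y : 'Z_2) : x + y + 1 = x + y -> False.
Proof. by case: (z2cases x) => ->; case: (z2cases y) => -> /eqP. Qed.
Lemma iso (x y z w : 'Z_2) : -w = x - y + z -> y = x + z + w.
Proof. by case: (z2cases x) => ->; case: (z2cases y) => ->;case: (z2cases z) => ->;case: (z2cases w) => -> /eqP // _; apply/eqP. Qed.
From mathcomp Require Import ring.
Definition la : letter := (false, false).
Definition lb : letter := (true, false).
Definition lbi : letter := (true, true).
Definition E1 w := eval_word xa yb w.
Definition E2 w := eval_word xaa 1%g w.
Definition chiA w := b2z (E1 w).1.1.
Definition chiB w := b2z (E1 w).1.2.
Definition f24 w := b2z (E1 w).2.
Definition f13 w := b2z (E2 w).2.

Lemma heis_mulE (u v : heis) : (u * v)%g = hmul u v.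
Proof. by []. Qed.

Lemma E1_cat g h : E1 (g ++ h) = hmul (E1 g) (E1 h).
Proof. by rewrite /E1 eval_cat. Qed.
Lemma E2_cat g h : E2 (g ++ h) = hmul (E2 g) (E2 h).
Proof. by rewrite /E2 eval_cat. Qed.

Lemma E12 w : (E2 w).1.1 = (E1 w).1.1.
Proof.
elim: w => [|[[] []] w IH] //=; rewrite -/(E1 w) -/(E2 w) /= ?IH //.
Qed.
Lemma E22 w : (E2 w).1.2 = (E1 w).1.1.
Proof.
elim: w => [|[[] []] w IH] //=; rewrite -/(E1 w) -/(E2 w) /= ?IH //.
Qed.
Lemma E1b w : (E1 w).1.2 = odd (count (fun l : letter => l.1) w).
Proof.
elim: w => [|[[] []] w IH] //=; rewrite -/(E1 w) /= IH //.
Qed.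

Lemma d1_0 (f : word -> 'Z_2) g h : f (g ++ h) = f g + f h -> d1 f g h = 0.
Proof. by rewrite /d1 => ->; ring. Qed.
Lemma d1_m (f : word -> 'Z_2) g h p : f (g ++ h) = f g + f h + p -> d1 f g h = - p.
Proof. by rewrite /d1 => ->; ring. Qed.

Lemma cont_E1 (p : heis -> bool) : cont1 in_G (fun w => b2z (p (E1 w))).
Proof. by exists heis, xa, yb, (fun u => b2z (p u)); split; [exact: tq1|]. Qed.
Lemma cont_f13 : cont1 in_G f13.
Proof. by exists heis, xaa, 1%g, (fun u : heis => b2z u.2); split; [exact: tq2|]. Qed.

Lemma chiA_cat g h : chiA (g ++ h) = chiA g + chiA h.
Proof. by rewrite /chiA E1_cat /= b2zD. Qed.
Lemma chiB_cat g h : chiB (g ++ h) = chiB g + chiB h.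
Proof. by rewrite /chiB E1_cat /= b2zD. Qed.
Lemma f24_cat g h : f24 (g ++ h) = f24 g + f24 h + chiA g * chiB h.
Proof. by rewrite /f24 E1_cat /= !b2zD b2zM. Qed.
Lemma f13_cat g h : f13 (g ++ h) = f13 g + f13 h + chiA g * chiA h.
Proof. by rewrite /f13 E2_cat /= !b2zD b2zM /chiA E12 E22. Qed.

Definition asys (i j : nat) : word -> 'Z_2 :=
  match i, j with
  | 1, 2 => chiA | 2, 3 => chiA | 3, 4 => chiB
  | 1, 3 => f13 | 2, 4 => f24 | _, _ => fun _ => 0 end.

Lemma asys_ok : massey_defsys in_G [:: chiA; chiA; chiB] asys.
Proof.
rewrite /massey_defsys /=; split; [|split].
{ move=> [|[|[|[|i]]]] [|[|[|[|[|j]]]]] //= _ _ _ Hne; try by case: Hne.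
  all: try exact: cont_f13; try exact: (cont_E1 (fun u => u.1.1));
    try exact: (cont_E1 (fun u => u.1.2)); try exact: (cont_E1 (fun u => u.2)). }
{ move=> [|[|[|[|i]]]] //= _ _.
  all: split; [move=> g h _ _; apply: d1_0;
    (exact: chiA_cat || exact: chiB_cat) | by exists 0; move=> w _; rewrite /d0 !subrr]. }
move=> [|[|[|[|i]]]] [|[|[|[|[|j]]]]] //= _ _ _ Hne g h _ _; try by case: Hne.
all: rewrite big_nat1 /=; apply: d1_m; (exact: f13_cat || exact: f24_cat).
Qed.

Lemma final (ca cb cab caa caab cbaa x24a x24b x24ab x24aa x13a x13b : 'Z_2) :
  -(1 * x24ab + x13a * 1) = cab - caab + ca ->
  -(1 * x24b + x13a * 1) = cb - cab + ca ->
  -(1 * 1) = x24b - x24ab + x24a ->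
  -(0 * x24aa + x13b * 0) = caa - cbaa + cb ->
  -(1 * x24a + x13a * 0) = ca - caa + ca ->
  caab = cbaa -> False.
Proof.
move=> /iso H1 /iso H2 /iso H3 /iso H4 /iso H5; subst.
by case: (z2cases ca) => ->; case: (z2cases cb) => ->;case: (z2cases x24a) => ->;
  case: (z2cases x24b) => ->; case: (z2cases x13a) => ->;
  case: (z2cases x13b) => ->; case: (z2cases x24aa) => -> /eqP.
Qed.

Lemma cohom_eq (S : pred word) (f f' : word -> 'Z_2) : cohom1 S f f' -> forall w, S w -> f w = f' w.
Proof. by move=> [c Hc] w Sw; apply/eqP; rewrite -subr_eq0 Hc // /d0 subrr. Qed.

Lemma rel_aab (gT : finGroupType) (x y : gT) : two_quotient x y ->
  eval_word x y [:: la; la; lb] = eval_word x y [:: lb; la; la].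
Proof.
move=> [_ Hr] /=; rewrite !mulg1 !mulgA.
by move: Hr; rewrite expgS expg1 !mulgA.
Qed.

Lemma mv3 (a : nat -> nat -> word -> 'Z_2) g h :
  massey_value 3 a g h = -(a 1%N 2%N g * a 2%N 4%N h + a 1%N 3%N g * a 3%N 4%N h).
Proof. by rewrite /massey_value big_ltn // big_nat1. Qed.

Lemma not_vanish : ~ massey_vanishes in_G [:: chiA; chiA; chiB].
Proof.
move=> [a [[_ [Hcoh Hd]] [c [Hcc Hv]]]].
have e12 w : a 1%N 2%N w = chiA w.
  by apply: (cohom_eq (Hcoh 1%N isT isT).2).
have e23 w : a 2%N 3%N w = chiA w.
  by apply: (cohom_eq (Hcoh 2%N isT isT).2).
have e34 w : a 3%N 4%N w = chiB w.
  by apply: (cohom_eq (Hcoh 3%N isT isT).2).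
have H24 := Hd 2%N 4%N isT isT isT ltac:(by case) [:: la] [:: lb] isT isT.
rewrite big_nat1 e23 e34 /d1 /= in H24.
have V g h : -(a 1%N 2%N g * a 2%N 4%N h + a 1%N 3%N g * a 3%N 4%N h) = c h - c (g ++ h) + c g.
  by rewrite -mv3; exact: Hv.
have V1 := V [:: la] [:: la; lb].
have V2 := V [:: la] [:: lb].
have V4 := V [:: lb] [:: la; la].
have V5 := V [:: la] [:: la].
rewrite !e12 !e34 /= in V1 V2 V4 V5.
have cA1 : chiA [:: la] = 1 by apply/val_inj.
have cA0 : chiA [:: lb] = 0 by apply/val_inj.
have cB1 : chiB [:: la; lb] = 1 by apply/val_inj.
have cB2 : chiB [:: lb] = 1 by apply/val_inj.
have cB3 : chiB [:: la; la] = 0 by apply/val_inj.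
have cB4 : chiB [:: la] = 0 by apply/val_inj.
rewrite ?cA1 ?cA0 ?cB1 ?cB2 ?cB3 ?cB4 in V1 V2 V4 V5 H24.
have V6 := cont1_eq Hcc isT isT (@rel_aab).
exact: (final V1 V2 (esym H24) V4 V5 V6).
Qed.

Lemma d1_eq0 (A : zmodType) (f : word -> A) g h : d1 f g h = 0 -> f (g ++ h) = f h + f g.
Proof. by rewrite /d1 => /eqP; rewrite addrAC subr_eq0 => /eqP <-. Qed.

Lemma rel_H (gT : finGroupType) (x y : gT) : two_quotient x y ->
  eval_word x y [:: la; la] = eval_word x y [:: lb; la; lbi; lb; la; lbi].
Proof.
move=> [_ Hr] /=; rewrite !mulg1 mulKg !mulgA.
move: Hr; rewrite expgS expg1 => Hr.
by rewrite -[(y * x * x)%g]mulgA -Hr mulgK.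
Qed.

Lemma z4_final (A A' : 'Z_4) : red2 A = 0 -> red2 A' = 1 -> A + A = A' + A' -> False.
Proof.
case: A => [[|[|[|[|//]]]] pA]; case: A' => [[|[|[|[|//]]]] pA'] /eqP // _ /eqP // _ /eqP.
Qed.

Lemma part2 : exists chi : word -> 'Z_2, Z1 in_H chi /\
     ~ exists psi : word -> 'Z_4, Z1 in_H psi /\
         cohom1 in_H (fun w => red2 (psi w)) chi.
Proof.
exists f24; split.
  split; first by exists heis, xa, yb, (fun u : heis => b2z u.2); split; [exact: tq1|].
  move=> g h _ Hh; apply: d1_0; rewrite f24_cat.
  have -> : chiB h = 0 by rewrite /chiB E1b (negbTE Hh).
  by rewrite mulr0 addr0.
move=> [psi [[Hc Hco] Hcoh]].
have r1 := cohom_eq Hcoh (w := [:: la]) isT.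
have r2 := cohom_eq Hcoh (w := [:: lb; la; lbi]) isT.
have s1 := d1_eq0 (Hco [:: la] [:: la] isT isT).
have s2 := d1_eq0 (Hco [:: lb; la; lbi] [:: lb; la; lbi] isT isT).
have s3 := cont1_eq Hc (w1 := [:: la; la]) (w2 := [:: lb; la; lbi; lb; la; lbi]) isT isT (@rel_H).
have f1 : f24 [:: la] = 0 by apply/val_inj.
have f2 : f24 [:: lb; la; lbi] = 1 by apply/val_inj.
rewrite f1 in r1; rewrite f2 in r2.
apply: (z4_final r1 r2).
by rewrite -s1 -s2.
Qed.

Section Part1.
Variable n : nat.
Hypothesis n1 : (1 <= n)%N.
Let m := (2 ^ n)%N.
Lemma m_gt1 : (1 < m)%N.
Proof. by rewrite /m -{1}(expn0 2) ltn_exp2l. Qed.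
Lemma two_dvd_m : (2 %| m)%N.
Proof. by rewrite /m -{1}(expn1 2) dvdn_exp2l. Qed.

Lemma red2D (u v : 'Z_m) : red2 (u + v) = red2 u + red2 v.
Proof.
have vZ2 k : val (k%:R : 'Z_2) = (k %% 2)%N by exact: val_Zp_nat.
have d2 : (2 %| (Zp_trunc m).+2)%N by rewrite Zp_cast ?m_gt1 // two_dvd_m.
by apply/val_inj; rewrite /red2 -natrD !vZ2 /= (modn_dvdm _ d2).
Qed.
Lemma red2N (u : 'Z_m) : red2 (- u) = - red2 u.
Proof.
apply/eqP; rewrite -subr_eq0 opprK -red2D addNr.
by apply/eqP/val_inj.
Qed.
Definition lift (z : 'Z_2) : 'Z_m := (val z)%:R.
Lemma red2_lift z : red2 (lift z) = z.
Proof.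
have vZm k : val (k%:R : 'Z_m) = (k %% m)%N by exact: (val_Zp_nat m_gt1).
rewrite /red2 /lift vZm modn_small ?natr_Zp //.
apply: (leq_trans (ltn_ord z)); exact: m_gt1.
Qed.
Lemma mulgZ (u v : 'Z_m) : (u * v)%g = u + v.
Proof. by []. Qed.
Lemma invgZ (u : 'Z_m) : (u^-1)%g = - u.
Proof. by []. Qed.

Lemma part1 (chi : word -> 'Z_2) : Z1 in_G chi ->
  exists psi : word -> 'Z_m, Z1 in_G psi /\ cohom1 in_G (fun w => red2 (psi w)) chi.
Proof.
move=> [Hc Hco].
pose X := lift (chi [:: la]); pose Y := lift (chi [:: lb]).
pose psi w := eval_word X Y w.
have cat g h : chi (g ++ h) = chi h + chi g by apply: d1_eq0; apply: Hco.
have c0 : chi [::] = 0.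
  by have := cat [::] [::]; rewrite -{1}[chi [::]]addr0 => /addrI <-.
have inv (l : bool) : chi [:: (l, true)] = - chi [:: (l, false)].
  apply/eqP; rewrite -addr_eq0 -cat -c0; apply/eqP.
  apply: (cont1_eq Hc) => // gT x y _ /=; rewrite !mulg1.
  by case: l; rewrite mulgV.
exists psi; split; first split.
- exists ('Z_m : finGroupType), X, Y, id; split => //; split.
    rewrite /pgroup cardsT card_ord Zp_cast ?m_gt1 //.
    by rewrite /m pnatX.
  exact: addrC.
- move=> g h _ _; rewrite /d1 /psi eval_cat mulgZ; ring.
- exists 0 => w _; rewrite /d0 subrr; apply/eqP; rewrite subr_eq0; apply/eqP.
  elim: w => [|l w IH]; first by rewrite c0; apply/val_inj.
  rewrite /psi /= mulgZ red2D -/(psi w) IH -cat1s cat addrC.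
  congr (_ + _).
  case: l => [[] []] /=; rewrite ?invgZ ?red2N ?red2_lift ?inv //.
Qed.
End Part1.

Local Close Scope ring_scope.

Theorem proposition8p1 :
  (* (1) H^1(G^, Z/2^n) -> H^1(G^, Z/2) surjective for all n >= 1 *)
  (forall n : nat, (1 <= n)%N ->
     forall chi : word -> 'Z_2, Z1 in_G chi ->
       exists psi : word -> 'Z_(2 ^ n), Z1 in_G psi /\
         cohom1 in_G (fun w => red2 (psi w)) chi) /\
  (* (2) H^1(H^, Z/4) -> H^1(H^, Z/2) not surjective *)
  (exists chi : word -> 'Z_2, Z1 in_H chi /\
     ~ exists psi : word -> 'Z_4, Z1 in_H psi /\
         cohom1 in_H (fun w => red2 (psi w)) chi) /\
  (* (3) a defined but non-vanishing mod 2 triple Massey product *)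
  (exists chi1 chi2 chi3 : word -> 'Z_2,
     [/\ Z1 in_G chi1, Z1 in_G chi2, Z1 in_G chi3,
         massey_defined in_G [:: chi1; chi2; chi3]
       & ~ massey_vanishes in_G [:: chi1; chi2; chi3]]).
Proof.
split; [|split].
- move=> n n1 chi Hchi; exact: (part1 n1 Hchi).
- exact: part2.
- exists chiA, chiA, chiB; split.
  + split; first exact: (cont_E1 (fun u => u.1.1)).
    by move=> g h _ _; apply: d1_0; exact: chiA_cat.
  + split; first exact: (cont_E1 (fun u => u.1.1)).
    by move=> g h _ _; apply: d1_0; exact: chiA_cat.
  + split; first exact: (cont_E1 (fun u => u.1.2)).
    by move=> g h _ _; apply: d1_0; exact: chiB_cat.
  + by exists asys; exact: asys_ok.
  + exact: not_vanish.
Qed.
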